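(* Let $C_{TS}>0$ be a fixed absolute constant and, for a problem instance, let $N_{TS}=C_{TS}\,\varepsilon_{TS}^{-2}\log(\delta_{TS}^{-1})$ where $\varepsilon_{TS}=\min_{i,j\in[K]}\mathbb E[(\mu_i-\mu_j)_+]$ and $\delta_{TS}=\min_{i\in[K]}\Pr[A^*=i]$. Fix $M\geq 1$. Suppose each prior $\mathcal P_i$, $i\in[K]$, is a $\mathrm{Beta}(\alpha_i,\beta_i)$ distribution with $\alpha_i,\beta_i\in[1,M]$. Then $N_{TS}=O_M(\log K)$, i.e. $N_{TS}\leq c_M\log K$ for $K\geq 2$, where $c_M$ depends only on $M$ (and $C_{TS}$).
   Context: A problem instance consists of $K$ arms with mean rewards $\mu_1,\dots,\mu_K\in[0,1]$ drawn independently, $\mu_i\sim\mathcal P_i$. $A^*=\min(\arg\max_j\mu_j)$. $(x)_+=\max(x,0)$. *)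

(* Defs.v *)
From HB Require Import structures.
From mathcomp Require Import all_boot all_order all_algebra.
From mathcomp Require Import all_classical all_reals all_analysis.
Set Implicit Arguments. Unset Strict Implicit. Unset Printing Implicit Defensive.
Import Order.TTheory GRing.Theory Num.Theory.
Local Open Scope classical_set_scope.
Local Open Scope ring_scope.

Section defs.
Context {R : realType}.

Definition beta_dens (a b : R) (x : R) : R := x `^ (a - 1) * (1 - x) `^ (b - 1).

Definition betaB (a b : R) : R :=
  fine (\int[lebesgue_measure]_(x in `[0%R, 1%R]) (beta_dens a b x)%:E)%E.

Definition betaR_prob (a b : R) (U : set R) : \bar R :=
  ((betaB a b)^-1%:E *
   \int[lebesgue_measure]_(x in U `&` `[0%R, 1%R]) (beta_dens a b x)%:E)%E.

Context {d : measure_display} {T : measurableType d} (P : probability T R).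

(* mutual independence of a finite family of real random variables:
   product rule for every choice of Borel sets (taking B i = setT for the
   indices outside a subfamily gives the rule for every subfamily) *)
Definition mutually_independent (K : nat) (X : 'I_K -> T -> R) : Prop :=
  forall B : 'I_K -> set R, (forall i, measurable (B i)) ->
    P (\bigcap_(i in [set: 'I_K]) (X i @^-1` B i)) =
    (\prod_(i < K) P (X i @^-1` B i))%E.

(* the event {A* = i}, where A* = min (argmax_j X j) *)
Definition Astar_event (K : nat) (X : 'I_K -> T -> R) (i : 'I_K) : set T :=
  [set t | forall j : 'I_K,
      ((j < i)%N -> X j t < X i t) /\ ((i < j)%N -> X j t <= X i t)].

Definition eps_TS (K : nat) (X : 'I_K -> T -> R) : R :=
  fine (\big[Order.min/+oo%E]_(i < K) \big[Order.min/+oo%E]_(j < K | i != j)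
          'E_P[fun t => (Num.max (X i t - X j t) 0)%R])%E.

Definition delta_TS (K : nat) (X : 'I_K -> T -> R) : R :=
  fine (\big[Order.min/+oo%E]_(i < K) P (Astar_event X i))%E.

Definition N_TS (C_TS : R) (K : nat) (X : 'I_K -> T -> R) : R :=
  C_TS * (eps_TS X) ^- 2 * ln ((delta_TS X)^-1).

End defs.

(* Main.v *)
Require Import Defs.
From HB Require Import structures.
From mathcomp Require Import all_boot all_order all_algebra.
From mathcomp Require Import all_classical all_reals all_analysis.
From mathcomp Require Import measurable_realfun.
From mathcomp Require Import ring lra.
Import Order.TTheory GRing.Theory Num.Theory.
Local Open Scope classical_set_scope.
Local Open Scope ring_scope.

Section aux.
Context {R : realType}.

Lemma powR_le1' (x e : R) : 0 <= x <= 1 -> 0 <= e -> x `^ e <= 1.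
Proof.
case/andP=> x0 x1 e0; have [->|xn0] := eqVneq x 0.
  by rewrite /powR eqxx; case: (e == 0).
have xp : 0 < x by rewrite lt_def xn0 x0.
by rewrite -(powRr0 x) ger_powR // xp x1.
Qed.

Lemma powR_lb (p x e m : R) : 0 < p -> p <= x -> x <= 1 -> 0 <= e -> e <= m ->
  p `^ m <= x `^ e.
Proof.
move=> p0 px x1 e0 em.
apply: (@le_trans _ _ (p `^ e)).
  by apply: ger_powR => //; rewrite p0 (le_trans px x1).
by apply: ge0_ler_powR => //; rewrite nnegrE ltW // (lt_le_trans p0 px).
Qed.

Lemma dens_ge0 (a b x : R) : 0 <= beta_dens a b x.
Proof. by rewrite /beta_dens mulr_ge0 // powR_ge0. Qed.

Lemma dens_le1 (a b x : R) : 1 <= a -> 1 <= b -> 0 <= x <= 1 -> beta_dens a b x <= 1.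
Proof.
move=> a1 b1 /andP[x0 x1]; rewrite /beta_dens -[X in _ <= X]mulr1.
apply: ler_pM; rewrite ?powR_ge0 //; apply: powR_le1'; rewrite ?subr_ge0 //.
  by rewrite x0 x1.
by rewrite x1 gerBl x0.
Qed.

Lemma dens_lb (a b M p q x : R) : 1 <= a <= M -> 1 <= b <= M -> 0 < p -> q < 1 ->
  p <= x <= q -> p `^ (M - 1) * (1 - q) `^ (M - 1) <= beta_dens a b x.
Proof.
move=> /andP[a1 aM] /andP[b1 bM] p0 q1 /andP[px xq].
have x1 : x <= 1 by rewrite ltW // (le_lt_trans xq q1).
rewrite /beta_dens; apply: ler_pM; rewrite ?powR_ge0 //.
  apply: powR_lb => //; first by rewrite subr_ge0.
  by rewrite lerD2r.
apply: powR_lb.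
- by rewrite subr_gt0.
- by rewrite lerD2l lerN2.
- by rewrite gerBl (le_trans (ltW p0) px).
- by rewrite subr_ge0.
- by rewrite lerD2r.
Qed.

Lemma dens_meas (a b : R) : measurable_fun setT (EFin \o beta_dens a b).
Proof.
apply/measurable_EFinP; apply: measurable_funM.
  exact: measurable_powR.
have -> : (fun x => (1 - x) `^ (b - 1)) = (@powR R ^~ (b - 1)) \o (fun x => 1 - x) by [].
apply: measurableT_comp; first exact: measurable_powR.
by apply: measurable_funB; [exact: measurable_cst|exact: measurable_id].
Qed.

Local Open Scope ereal_scope.
Definition Iv (a b : R) (V : set R) :=
  \int[lebesgue_measure]_(x in V) (beta_dens a b x)%:E.

Lemma Iv_lb (a b M p q : R) : (1 <= a <= M)%R -> (1 <= b <= M)%R -> (0 < p)%R -> (p <= q)%R -> (q < 1)%R ->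
  ((q - p) * p `^ (M - 1) * (1 - q) `^ (M - 1))%:E <= Iv a b `[p, q].
Proof.
move=> ha hb p0 pq q1.
set k := (p `^ (M - 1) * (1 - q) `^ (M - 1))%R.
apply: (@le_trans _ _ (\int[lebesgue_measure]_(x in `[p, q]) (cst k%:E) x)).
  have H : lebesgue_measure (`[p, q]%classic : set R) = (q - p)%:E.
    rewrite lebesgue_measure_itv /=.
    case: ifPn => [_|]; first by rewrite EFinB.
    rewrite lte_fin -leNgt => qp; have -> : q = p by apply/eqP; rewrite eq_le qp pq.
    by rewrite subrr.
  rewrite integral_cst //.
  apply: (@le_trans _ _ (k%:E * (q - p)%:E)).
    by rewrite -EFinM lee_fin /k [X in (_ <= X)%R]mulrC mulrA.
  rewrite le_eqVlt; apply/orP; left; apply/eqP; congr (_ * _); exact: (esym H).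
apply: ge0_le_integral => //.
- by move=> x _; rewrite lee_fin /k mulr_ge0 // powR_ge0.
- exact: measurable_funS (dens_meas a b).
- move=> x; rewrite /= in_itv /= => hx; rewrite lee_fin.
  exact: dens_lb.
Qed.

Lemma Iv_ub (a b : R) (V : set R) : (1 <= a)%R -> (1 <= b)%R -> measurable V ->
  V `<=` `[0%R, 1%R] -> Iv a b V <= lebesgue_measure V.
Proof.
move=> a1 b1 mV V01.
rewrite -[X in _ <= X]mul1e -integral_cst //.
apply: ge0_le_integral => //.
- by move=> x _; rewrite lee_fin dens_ge0.
- exact: measurable_funS (dens_meas a b).
- move=> x /V01; rewrite /= in_itv /= => hx; rewrite lee_fin.
  exact: dens_le1.
Qed.

Lemma Iv_ge0 (a b : R) V : 0 <= Iv a b V.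
Proof. by apply: integral_ge0 => x _; rewrite lee_fin dens_ge0. Qed.

Lemma Iv_mono (a b : R) V W : measurable V -> measurable W -> V `<=` W -> Iv a b V <= Iv a b W.
Proof.
move=> mV mW VW; apply: ge0_subset_integral => //.
  exact: measurable_funS (dens_meas a b).
by move=> x _; rewrite lee_fin dens_ge0.
Qed.


Lemma ebound (x : \bar R) (y : R) : 0 <= x -> x <= y%:E ->
  x = (fine x)%:E /\ (0 <= fine x <= y)%R.
Proof.
case: x => [r| |] //=; rewrite !lee_fin => r0 ry.
by rewrite r0 ry.
Qed.

Lemma leb01 : lebesgue_measure (`[0%R, 1%R]%classic : set R) = 1.
Proof. by rewrite lebesgue_measure_itv /= lte_fin ltr01 oppr0 adde0. Qed.

Lemma leb_itv (p q : R) : (p <= q)%R -> lebesgue_measure (`[p, q]%classic : set R) = (q - p)%:E.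
Proof.
move=> pq; rewrite lebesgue_measure_itv /=.
case: ifPn => [_|]; first by rewrite EFinB.
rewrite lte_fin -leNgt => qp; have -> : q = p by apply/eqP; rewrite eq_le qp pq.
by rewrite subrr.
Qed.

End aux.

Definition cM {R : realType} (M : R) : R :=
  ((7/8 - 1/8) * (1/8) `^ (M - 1) * (1 - 7/8) `^ (M - 1))%R.

Lemma cM_gt0 {R : realType} (M : R) : (0 < cM M)%R.
Proof.
rewrite /cM !mulr_gt0 ?powR_gt0 //; lra.
Qed.

Lemma cM_le1 {R : realType} (M : R) : (1 <= M)%R -> (cM M <= 1)%R.
Proof.
move=> M1; rewrite /cM.
have e0 : (0 <= M - 1)%R by rewrite subr_ge0.
have h8 : (0 <= (1/8 : R) <= 1)%R by apply/andP; split; lra.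
have h78 : (0 <= 1 - (7/8 : R) <= 1)%R by apply/andP; split; lra.
rewrite -[X in (_ <= X)%R]mulr1; apply: ler_pM.
- by rewrite mulr_ge0 ?powR_ge0 //; lra.
- exact: powR_ge0.
- rewrite -[X in (_ <= X)%R]mulr1; apply: ler_pM.
  + lra.
  + exact: powR_ge0.
  + lra.
  + exact: powR_le1'.
- exact: powR_le1'.
Qed.

Section B.
Context {R : realType} {d : measure_display} {T : measurableType d} (P : probability T R).
Variables (a b M : R) (ha : (1 <= a <= M)%R) (hb : (1 <= b <= M)%R) (X : {RV P >-> R}).
Hypothesis HX : forall U, measurable U -> P (X @^-1` U) = betaR_prob a b U.

Local Open Scope ereal_scope.

Let a1 : (1 <= a)%R. Proof. by case/andP: ha. Qed.
Let b1 : (1 <= b)%R. Proof. by case/andP: hb. Qed.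

Lemma I01_ub : Iv a b `[0%R, 1%R] <= 1.
Proof. by rewrite -leb01; apply: Iv_ub. Qed.

Lemma I01_lb : (cM M)%:E <= Iv a b `[0%R, 1%R].
Proof.
rewrite /cM; apply: (le_trans (@Iv_lb R a b M (1/8) (7/8) ha hb _ _ _)).
- lra.
- lra.
- lra.
apply: Iv_mono => //= x; rewrite /= !in_itv /= => /andP[h1 h2].
apply/andP; split; lra.
Qed.

Lemma betaB_bounds : (cM M <= betaB a b <= 1)%R.
Proof.
have [E h] := @ebound R _ 1 (Iv_ge0 a b `[0%R, 1%R]) I01_ub.
have L := I01_lb; rewrite E lee_fin in L.
change (betaB a b) with (fine (Iv a b `[0%R, 1%R])).
by rewrite L; case/andP: h.
Qed.


Let binv_bounds : (1 <= (betaB a b)^-1 <= (cM M)^-1)%R.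
Proof.
have /andP[h1 h2] := betaB_bounds.
have c0 := cM_gt0 M.
have bp : (0 < betaB a b)%R by apply: lt_le_trans h1.
rewrite invf_ge1 // h2 /= lef_pV2 // posrE //.
Qed.

Lemma P_lb (p q : R) : (0 < p)%R -> (p <= q)%R -> (q < 1)%R ->
  ((q - p) * p `^ (M - 1) * (1 - q) `^ (M - 1))%:E <= P (X @^-1` `[p, q]).
Proof.
move=> p0 pq q1.
rewrite HX //.
have -> : betaR_prob a b `[p, q] = ((betaB a b)^-1)%:E * Iv a b (`[p, q] `&` `[0%R, 1%R]) by [].
have sub : `[p, q] `<=` `[0%R, 1%R].
  by move=> x; rewrite /= !in_itv /= => /andP[h1 h2]; apply/andP; split; lra.
rewrite setIidl //.
have U := @Iv_ub R a b _ a1 b1 (measurable_itv _) sub.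
rewrite leb_itv // in U.
have [E h] := @ebound R _ _ (Iv_ge0 a b _) U.
have L := @Iv_lb R a b M p q ha hb p0 pq q1; rewrite E lee_fin in L.
rewrite E -EFinM lee_fin.
have /andP[i1 _] := binv_bounds.
case/andP: h => h0 _.
apply: (le_trans L); rewrite -[X in (X <= _)%R]mul1r.
by apply: ler_wpM2r.
Qed.

Lemma P_ub (s : R) : (0 <= s)%R -> (s <= 1)%R ->
  P (X @^-1` `[s, +oo[) <= ((1 - s) / cM M)%:E.
Proof.
move=> s0 s1.
rewrite HX //.
have -> : betaR_prob a b `[s, +oo[ = ((betaB a b)^-1)%:E * Iv a b (`[s, +oo[ `&` `[0%R, 1%R]) by [].
have -> : `[s, +oo[ `&` `[0%R, 1%R] = (`[s, 1%R]%classic : set R).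
  apply/seteqP; split => x; rewrite /= !in_itv /= ?andbT.
    by case=> h1 /andP[h2 h3]; apply/andP; split.
  by move=> /andP[h1 h2]; split => //; apply/andP; split => //; lra.
have sub : `[s, 1%R] `<=` `[0%R, 1%R].
  by move=> x; rewrite /= !in_itv /= => /andP[h1 h2]; apply/andP; split; lra.
have U := @Iv_ub R a b _ a1 b1 (measurable_itv _) sub.
rewrite leb_itv // in U.
have [E h] := @ebound R _ _ (Iv_ge0 a b _) U.
rewrite E -EFinM lee_fin.
have /andP[_ i2] := binv_bounds.
case/andP: h => h0 h1.
rewrite mulrC; apply: ler_pM => //.
have /andP[i1 _] := binv_bounds; lra.
Qed.

Lemma P_lt (s : R) : (0 <= s)%R -> (s <= 1)%R ->
  ((1 - (1 - s) / cM M)%:E <= P (X @^-1` `]-oo, s[)).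
Proof.
move=> s0 s1.
have mA : measurable (X @^-1` `[s, +oo[) by apply: measurable_funPTI.
have -> : X @^-1` `]-oo, s[ = ~` (X @^-1` `[s, +oo[).
  apply/seteqP; split => w /=; rewrite !in_itv /= ?andbT.
    by move=> h; apply/negP; rewrite -ltNge.
  by move=> /negP; rewrite -ltNge.
rewrite probability_setC //.
have ub := P_ub s s0 s1.
have [E h] := @ebound R _ 1 (measure_ge0 P (X @^-1` `[s, +oo[)) (probability_le1 P mA).
rewrite E in ub *; rewrite lee_fin in ub.
by rewrite -EFinB lee_fin; lra.
Qed.

End B.

Lemma prod_lb {R : realType} (K : nat) (F : 'I_K -> \bar R) (g : 'I_K -> R) :
  (forall k, 0 <= g k) -> (forall k, ((g k)%:E <= F k)%E) ->
  ((\prod_(k < K) g k)%:E <= \prod_(k < K) F k)%E.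
Proof.
move=> g0 gF.
have : (0 <= \prod_(k < K) g k /\ ((\prod_(k < K) g k)%:E <= \prod_(k < K) F k)%E).
  apply: (big_ind2 (fun (r : R) (e : \bar R) => 0 <= r /\ (r%:E <= e)%E)).
  - by split.
  - move=> r1 e1 r2 e2 [r10 h1] [r20 h2]; split; first exact: mulr_ge0.
    by rewrite EFinM; apply: lee_pmul; rewrite ?lee_fin.
  - by move=> k _; split.
by case.
Qed.

Section C.
Context {R : realType} {d : measure_display} {T : measurableType d} (P : probability T R).
Variables (K : nat) (X : 'I_K -> {RV P >-> R}).
Hypothesis Hind : mutually_independent P (fun i => X i : T -> R).

Lemma indep_lb (B : 'I_K -> set R) (g : 'I_K -> R) :
  (forall k, measurable (B k)) -> (forall k, 0 <= g k) ->
  (forall k, ((g k)%:E <= P (X k @^-1` B k))%E) ->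
  ((\prod_(k < K) g k)%:E <= P (\bigcap_(k in [set: 'I_K]) (X k @^-1` B k)))%E.
Proof.
move=> mB g0 gP.
rewrite (Hind B mB).
exact: prod_lb.
Qed.

Lemma pair_lb (i j : 'I_K) (A Bs : set R) (ga gb : R) : i != j ->
  measurable A -> measurable Bs -> 0 <= ga -> 0 <= gb ->
  (ga%:E <= P (X i @^-1` A))%E -> (gb%:E <= P (X j @^-1` Bs))%E ->
  ((ga * gb)%:E <= P (X i @^-1` A `&` X j @^-1` Bs))%E.
Proof.
move=> ij mA mB ga0 gb0 hA hB.
pose B k := if k == i then A else if k == j then Bs else setT.
pose g k := if k == i then ga else if k == j then gb else 1.
have := @indep_lb B g.
have -> : \bigcap_(k in [set: 'I_K]) (X k @^-1` B k) = X i @^-1` A `&` X j @^-1` Bs.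
  apply/seteqP; split => t.
    move=> H; split.
      by have := H i Logic.I; rewrite /B eqxx.
    by have := H j Logic.I; rewrite /B eq_sym (negbTE ij) eqxx.
  move=> [hi hj] k _; rewrite /B /=.
  by case: eqP => [->//|_]; case: eqP => [->//|_].
have -> : \prod_(k < K) g k = ga * gb.
  rewrite (bigD1 i) //= /g eqxx (bigD1 j) //=; last by rewrite eq_sym.
  rewrite eq_sym (negbTE ij) eqxx big1 ?mulr1 // => k /andP[ki kj].
  by rewrite (negbTE ki) (negbTE kj).
apply.
- by move=> k; rewrite /B; case: eqP => _ //; case: eqP.
- by move=> k; rewrite /g; case: eqP => _ //; case: eqP.
- move=> k; rewrite /g /B; case: eqP => [->//|_]; case: eqP => [->//|_].
  by rewrite preimage_setT probability_setT.
Qed.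

Lemma Astar_meas (i : 'I_K) : measurable (Astar_event (fun k => X k : T -> R) i).
Proof.
have -> : Astar_event (fun k => X k : T -> R) i =
   ~` \bigcup_(j in [set: 'I_K]) ~` [set t | ((j < i)%N -> X j t < X i t) /\ ((i < j)%N -> X j t <= X i t)].
  rewrite setC_bigcup; apply/seteqP; split => t /=.
    by move=> H j _ nA; apply: nA; exact: H j.
  by move=> H j; apply: contrapT; exact: (H j Logic.I).
apply: measurableC; apply: fin_bigcup_measurable; first exact: finite_finset.
move=> j _; apply: measurableC.
have mD : measurable_fun setT (fun t => X i t - X j t).
  by apply: measurable_funB.
have Hlt : measurable [set t | X j t < X i t].
  have := mD measurableT _ (measurable_itv `]0, +oo[).
  rewrite setTI; congr measurable; apply/seteqP; split => t /=;
    by rewrite in_itv /= andbT subr_gt0.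
have Hle : measurable [set t | X j t <= X i t].
  have := mD measurableT _ (measurable_itv `[0, +oo[).
  rewrite setTI; congr measurable; apply/seteqP; split => t /=;
    by rewrite in_itv /= andbT subr_ge0.
move: (j < i)%N (i < j)%N => b1 b2.
have -> : [set t | (b1 -> X j t < X i t) /\ (b2 -> X j t <= X i t)] =
   (if b1 then [set t | X j t < X i t] else setT) `&` (if b2 then [set t | X j t <= X i t] else setT).
  apply/seteqP; split => t /=.
    by case: b1; case: b2 => /= -[h1 h2]; split => //; [apply: h1|apply: h2|apply: h1|apply: h2].
  by case: b1; case: b2 => /= -[h1 h2]; split.
apply: measurableI; [by case: b1|by case: b2].
Qed.

Lemma exp_lb (i j : 'I_K) (r : R) : 0 <= r ->
  (r%:E <= P (X i @^-1` `[(3/4)%R, (7/8)%R] `&` X j @^-1` `[(1/8)%R, (1/4)%R]))%E ->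
  (((1/2)%R * r)%:E <= 'E_P[fun t => Num.max (X i t - X j t)%R 0%R])%E.
Proof.
move=> r0 hr.
set S := (X i @^-1` `[(3/4)%R, (7/8)%R] `&` X j @^-1` `[(1/8)%R, (1/4)%R]) : set T.
have mS : measurable S by apply: measurableI; apply: measurable_funPTI.
rewrite unlock.
apply: (@le_trans _ _ (\int[P]_w ((1/2)%:E * (\1_S w)%:E))%E).
  rewrite ge0_integralZl_EFin //; last by apply/measurable_EFinP; exact: measurable_indic.
  rewrite integral_indic // setIT EFinM; apply: lee_pmul => //; rewrite ?lee_fin //; lra.
apply: ge0_le_integral => //.
- apply: measurable_funeM; apply/measurable_EFinP; exact: measurable_indic.
- apply/measurable_EFinP; apply: measurable_maxr; last exact: measurable_cst.
  exact: measurable_funB.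
- move=> t _; rewrite -EFinM lee_fin indicE.
  case: (boolP (t \in S)) => [/set_mem [] /=|_]; last first.
    by rewrite mulr0 le_max lexx orbT.
  rewrite !in_itv /= => /andP[h1 h2] /andP[h3 h4].
  rewrite mulr1 le_max; apply/orP; left; lra.
Qed.

End C.

Lemma fin_bigcap_meas {d : measure_display} {T : measurableType d} (K : nat) (F : 'I_K -> set T) :
  (forall k, measurable (F k)) -> measurable (\bigcap_(k in [set: 'I_K]) F k).
Proof.
move=> mF; rewrite -[X in measurable X]setCK setC_bigcap; apply: measurableC.
apply: fin_bigcup_measurable; first exact: finite_finset.
by move=> k _; apply: measurableC.
Qed.

Lemma lnM' {R : realType} (x y : R) : 0 < x -> 0 < y -> ln (x * y) = ln x + ln y.
Proof. by move=> hx hy; rewrite lnM ?posrE. Qed.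

Lemma bernoulli {R : realType} (x : R) (n : nat) : (0 <= x <= 1)%R -> (1 - n%:R * x <= (1 - x) ^+ n)%R.
Proof.
move=> /andP[x0 x1]; elim: n => [|n IH]; first by rewrite mul0r subr0 expr0.
have y0 : (0 <= (1 - x) ^+ n)%R by rewrite exprn_ge0 // subr_ge0.
rewrite exprSr -natr1.
have h : (0 <= ((1 - x) ^+ n - (1 - n%:R * x)) * (1 - x))%R.
  by rewrite mulr_ge0 // subr_ge0.
have h2 : (0 <= n%:R * x * x :> R)%R by rewrite !mulr_ge0.
nra.
Qed.

Theorem corollary3p4 (R : realType) (C_TS : R) (hC : 0 < C_TS)
    (M : R) (hM : 1 <= M) :
  exists c_M : R, forall K : nat, (2 <= K)%N ->
  forall alpha beta : 'I_K -> R,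
    (forall i, 1 <= alpha i <= M) -> (forall i, 1 <= beta i <= M) ->
  forall (d : measure_display) (T : measurableType d) (P : probability T R)
         (mu : 'I_K -> {RV P >-> R}),
    mutually_independent P (fun i => mu i : T -> R) ->
    (forall i (U : set R), measurable U ->
       P (mu i @^-1` U) = betaR_prob (alpha i) (beta i) U) ->
    N_TS P C_TS (fun i => mu i : T -> R) <= c_M * ln K%:R.
Proof.
have m0 : 0 <= M - 1 by rewrite subr_ge0.
have c0 : 0 < cM M := cM_gt0 M.
have c1 : cM M <= 1 := @cM_le1 R M hM.
pose A0 : R := (7/8 - 3/4) * (3/4) `^ (M - 1) * (1 - 7/8) `^ (M - 1).
pose B0 : R := (1/4 - 1/8) * (1/8) `^ (M - 1) * (1 - 1/4) `^ (M - 1).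
have A0p : 0 < A0 by rewrite /A0 !mulr_gt0 ?powR_gt0 //; lra.
have B0p : 0 < B0 by rewrite /B0 !mulr_gt0 ?powR_gt0 //; lra.
pose e0 : R := 1/2 * (A0 * B0).
have e0p : 0 < e0 by rewrite /e0; apply: mulr_gt0; [lra | exact: mulr_gt0].
have l2p : 0 < ln (2 : R) by apply: ln_gt0; lra.
have lc0 : ln (cM M) <= 0 by apply: ln_le0.
pose Lc : R := (1 + (M - 1)) * (4 - ln (cM M) / ln 2).
have Lc0 : 0 <= Lc.
  rewrite /Lc mulr_ge0 //; first lra.
  have : 0 <= (- ln (cM M)) / ln 2 by apply: divr_ge0; lra.
  rewrite mulNr; lra.
exists (C_TS * e0^-2 * Lc).
move=> K K2 alpha beta ha hb d T P mu Hind Hdist.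
have Kr : (2 : R) <= K%:R by rewrite (ler_nat R 2 K).
have K0 : (0 < K)%N by apply: leq_trans K2.
have Hexp : forall i j : 'I_K, i != j ->
    (e0%:E <= 'E_P[fun t => Num.max (mu i t - mu j t)%R 0%R])%E.
  move=> i j ij.
  apply: (@exp_lb R d T P K mu i j); first by rewrite mulr_ge0 // ltW.
  apply: (@pair_lb R d T P K mu Hind i j _ _ _ _ ij).
  - exact: measurable_itv.
  - exact: measurable_itv.
  - exact: ltW.
  - exact: ltW.
  - have := @P_lb R d T P (alpha i) (beta i) M (ha i) (hb i) (mu i) (Hdist i) (3/4) (7/8).
    by apply; lra.
  - have := @P_lb R d T P (alpha j) (beta j) M (ha j) (hb j) (mu j) (Hdist j) (1/8) (1/4).
    by apply; lra.
have epsE : (eps_TS P (fun i => mu i : T -> R)) ^- 2 <= e0 ^-2.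
  rewrite /eps_TS.
  have : (e0%:E <= \big[Order.min/+oo%E]_(i < K) \big[Order.min/+oo%E]_(j < K | i != j)
          'E_P[fun t => Num.max (mu i t - mu j t)%R 0%R])%E.
    apply: le_bigmin => //; first exact: leey.
    move=> i _; apply: le_bigmin => //; first exact: leey.
    by move=> j ij; apply: Hexp.
  case: (\big[Order.min/+oo%E]_(i < K) _)%E => [r| |] //=.
    rewrite lee_fin => er.
    rewrite lef_pV2 ?posrE ?exprn_gt0 //; last by apply: lt_le_trans er.
    by rewrite lerXn2r // ?nnegrE ltW //; apply: lt_le_trans er.
  by move=> _; rewrite expr0n /= invr0 invr_ge0 exprn_ge0 // ltW.
have K2r : (0 < K%:R ^+ 2 :> R) by rewrite exprn_gt0 //; lra.
pose tt : R := cM M / K%:R ^+ 2.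
have Ksq : (4 : R) <= K%:R ^+ 2 by rewrite expr2; nra.
have tt0 : 0 < tt by rewrite /tt divr_gt0.
have tt1 : tt <= 1/4.
  rewrite /tt ler_pdivrMr //; lra.
pose q0 : R := 1 - 1 / K%:R ^+ 2.
pose L' : R := (tt / 2) * (1/2) `^ (M - 1) * (tt / 2) `^ (M - 1).
have t2 : 0 < tt / 2 by lra.
have h12 : 0 < (1/2 : R) by lra.
have L'0 : 0 < L' by rewrite /L'; apply: mulr_gt0; [apply: mulr_gt0 =>//|]; exact: powR_gt0.
have Hdel : forall i, ((L' / 2)%:E <= P (Astar_event (fun k => mu k : T -> R) i))%E.
  move=> i.
  pose B k : set R := if k == i then `[1 - tt, 1 - tt / 2]%classic else `]-oo, 1 - tt[%classic.
  pose g k : R := (if k == i then L' else 1) * q0.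
  have q00 : 0 <= q0 /\ q0 <= 1.
    rewrite /q0; split; last by rewrite gerBl divr_ge0 // ltW.
    rewrite subr_ge0 ler_pdivrMr // mul1r; lra.
  have := @indep_lb R d T P K mu Hind B g.
  have -> : \prod_(k < K) g k = L' * q0 ^+ K.
    rewrite /g big_split /= prodr_const card_ord; congr (_ * _).
    by rewrite (bigD1 i) //= eqxx big1 ?mulr1 // => k /negbTE ->.
  move=> H.
  have H1 : ((L' * q0 ^+ K)%:E <= P (\bigcap_(k in [set: 'I_K]) (mu k @^-1` B k)))%E.
    apply: H.
    - by move=> k; rewrite /B; case: eqP.
    - move=> k; rewrite /g; case: eqP => _; rewrite mulr_ge0 //; [exact: ltW|by case: q00|by case: q00].
    - move=> k; rewrite /g /B; case: eqP => [->|_].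
        apply: le_trans (_ : L'%:E <= _)%E.
          by rewrite lee_fin ger_pMr //; case: q00.
        have h := @P_lb R d T P (alpha i) (beta i) M (ha i) (hb i) (mu i) (Hdist i) (1 - tt) (1 - tt/2)
          ltac:(lra) ltac:(lra) ltac:(lra).
        apply: le_trans h.
        rewrite lee_fin /L'.
        have -> : 1 - tt / 2 - (1 - tt) = tt / 2 by field.
        have -> : 1 - (1 - tt / 2) = tt / 2 by field.
        apply: ler_wpM2r; first exact: powR_ge0.
        apply: ler_wpM2l; first lra.
        apply: ge0_ler_powR => //; rewrite ?nnegrE; lra.
      have h := @P_lt R d T P (alpha k) (beta k) M (ha k) (hb k) (mu k) (Hdist k) (1 - tt)
          ltac:(lra) ltac:(lra).
      apply: le_trans h.
      rewrite mul1r lee_fin /q0 /tt.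
      have -> : 1 - (1 - cM M / K%:R ^+ 2) = cM M / K%:R ^+ 2 by rewrite opprB addrC subrK.
      by rewrite mulrAC divff ?mul1r //; exact: lt0r_neq0.
  apply: (le_trans _ (le_trans H1 _)).
    rewrite lee_fin ler_pM2l //.
    have hbern := @bernoulli R (1 / K%:R ^+ 2) K.
    have x0 : (0 : R) <= 1 / K%:R ^+ 2 by rewrite divr_ge0 // ltW.
    have x1 : 1 / K%:R ^+ 2 <= 1 :> R by rewrite ler_pdivrMr // mul1r; lra.
    have hq := hbern (introT andP (conj x0 x1)); rewrite -/q0 in hq.
    apply: le_trans hq.
    have -> : K%:R * (1 / K%:R ^+ 2) = 1 / K%:R :> R.
      by rewrite expr2 !mul1r invfM mulrA divff ?mul1r // gt_eqF //; lra.
    have : 1 / K%:R <= 1 / 2 :> R.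
      by rewrite ler_pdivrMr ?mul1r; [rewrite mulrC -ler_pdivrMr ?mul1r //; lra | lra].
    lra.
  apply: le_measure; rewrite ?inE.
  - apply: fin_bigcap_meas => k; apply: measurable_funPTI.
    by rewrite /B; case: eqP.
  - exact: Astar_meas.
  move=> w Hw j; have Hi := Hw i Logic.I; have Hj := Hw j Logic.I.
  move: Hi Hj; rewrite /B /= eqxx /= !in_itv /= => /andP[hi1 hi2].
  case: eqP => [->|/eqP ji]; first by split => h; [rewrite ltnn in h|rewrite lexx].
  rewrite /= in_itv /= => hj.
  by split => _; [lra | apply: ltW; lra].
rewrite /N_TS.
set eps := eps_TS P _.
have u0 : 0 <= eps ^- 2 by rewrite invr_ge0 sqr_ge0.
pose i0 : 'I_K := Ordinal K0.
have dlb : ((L' / 2)%:E <= \big[Order.min/+oo%E]_(i < K) P (Astar_event (fun k => mu k : T -> R) i))%E.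
  by apply: le_bigmin; [exact: leey | move=> i _; exact: Hdel].
have dub : (\big[Order.min/+oo%E]_(i < K) P (Astar_event (fun k => mu k : T -> R) i) <= 1)%E.
  apply: (le_trans (bigmin_le _ i0 _)).
  exact: (probability_le1 P (@Astar_meas R d T P K mu i0)).
have L2 : 0 < L' / 2 by lra.
have [E h] := @ebound R _ 1 (le_trans (ltW (L2 : (0 < (L' / 2)%:E)%E)) dlb) dub.
rewrite E lee_fin in dlb.
have -> : delta_TS P (fun i => mu i : T -> R) =
   fine (\big[Order.min/+oo%E]_(i < K) P (Astar_event (fun k => mu k : T -> R) i)) by [].
set dd := fine _ in dlb h *.
have dd0 : 0 < dd by apply: lt_le_trans dlb.
have lnb : ln dd^-1 <= - ln (L' / 2).
  rewrite lnV ?posrE // lerN2 ler_ln ?posrE //.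
have key : - ln (L' / 2) <= Lc * ln K%:R.
  have p12 : (1/2 : R) `^ (M - 1) > 0 by apply: powR_gt0.
  have pt2 : (tt/2 : R) `^ (M - 1) > 0 by apply: powR_gt0.
  have Kp : (0 : R) < K%:R by lra.
  have lnh : ln (1/2 : R) = - ln 2 by rewrite mul1r lnV ?posrE.
  have lnt2 : ln (tt / 2) = ln (cM M) - ln (K%:R) *+ 2 - ln 2.
    by rewrite ln_div ?posrE // /tt ln_div ?posrE // lnXn.
  have lnL : ln (L' / 2) = ln (tt / 2) + (M - 1) * ln (1/2) + (M - 1) * ln (tt / 2) - ln 2.
    rewrite ln_div ?posrE // /L'.
    rewrite (lnM' _ _ (mulr_gt0 t2 p12) pt2) (lnM' _ _ t2 p12) !ln_powR.
    by [].

  rewrite lnL lnt2 lnh mulr2n.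
  have lK2 : ln (2 : R) <= ln K%:R by rewrite ler_ln ?posrE //; lra.
  set lK := ln (K%:R : R) in lK2 *.
  set l2 := ln (2 : R) in lK2 l2p lc0 lnh *.
  set lc := ln (cM M) in lc0 *.
  rewrite /Lc -/lc -/l2.
  set r := lc / l2.
  have lcE : lc = r * l2 by rewrite /r divfK // gt_eqF.
  have r0 : r <= 0 by rewrite /r pmulr_lle0 // invr_gt0.
  rewrite lcE.
  have hp : 0 <= (1 + (M - 1)) * (lK - l2) * (2 - r).
    by rewrite !mulr_ge0 //; lra.
  rewrite -subr_ge0; apply: le_trans hp _.
  rewrite le_eqVlt; apply/orP; left; apply/eqP; ring.
have v_le := le_trans lnb key.
have Y0 : 0 <= Lc * ln (K%:R : R).
  by rewrite mulr_ge0 // ln_ge0 //; lra.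
rewrite -[X in _ <= X]mulrA.
have [v0|v0] := leP 0 (ln dd^-1).
  apply: ler_pM.
  - exact: mulr_ge0 (ltW hC) u0.
  - exact: v0.
  - by rewrite ler_pM2l.
  - exact: v_le.
apply: le_trans (_ : _ <= 0) _.
  apply: mulr_ge0_le0; first exact: mulr_ge0 (ltW hC) u0.
  exact: ltW.
apply: mulr_ge0 => //; apply: mulr_ge0; first exact: ltW.
by rewrite invr_ge0 sqr_ge0.
Qed.
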